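(* Let $A\subset E$ be nonempty, and suppose that the problem $$\min_L \xi(L)\quad\text{s.t. } L\text{ is a lower contour set in } A$$ admits a solution (a minimizer). Then it has a largest minimizer, i.e. a minimizer $L^\star$ such that every minimizer $L$ satisfies $L\subset L^\star$.
   Context: $E$ is a finite or countably infinite set with a preorder $\precsim$ (reflexive and transitive) such that for every sequence $e_1\succsim e_2\succsim\cdots$ in $E$ there is $N\ge1$ with $e_N\precsim e_n$ for all $n\ge N$. $\pi_0\in(0,1)$; $F_G,F_B$ are probability distributions on $E$ such that every $e\in E$ has $F_G(e)>0$ or $F_B(e)>0$. For nonempty $B\subset E$, $\nu(B)=\frac{F_G(B)\pi_0}{F_G(B)\pi_0+F_B(B)(1-\pi_0)}$ and $\xi(B)=\phi(\nu(B))$, where $\phi:[0,1]\to\mathbb{R}$ is strictly increasing. For nonempty $A\subset E$, a nonempty $L\subset A$ is a lower contour set in $A$ if for all $e\in L$ and $e'\in A$, $e'\precsim e$ implies $e'\in L$. *)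

(* Defs.v *)
From HB Require Import structures.
From mathcomp Require Import all_boot all_order all_algebra.
From mathcomp Require Import classical_sets boolp reals ereal esum.
Set Implicit Arguments. Unset Strict Implicit. Unset Printing Implicit Defensive.
Import Order.TTheory GRing.Theory Num.Theory.
Local Open Scope classical_set_scope.
Local Open Scope ring_scope.

Section Defs.
Context {R : realType} {E : countType}.

Definition is_distribution (p : E -> R) : Prop :=
  (forall e, 0 <= p e) /\ (\esum_(i in [set: E]) (p i)%:E = 1%E).

Definition prob (p : E -> R) (B : set E) : R := fine (\esum_(i in B) (p i)%:E).

Definition nu (pi0 : R) (pG pB : E -> R) (B : set E) : R :=
  prob pG B * pi0 / (prob pG B * pi0 + prob pB B * (1 - pi0)).

Definition xi (phi : R -> R) (pi0 : R) (pG pB : E -> R) (B : set E) : R :=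
  phi (nu pi0 pG pB B).

(* L is a lower contour set in A w.r.t. the preorder le (le x y means x ≾ y) *)
Definition lower_contour (le : E -> E -> Prop) (A L : set E) : Prop :=
  L !=set0 /\ L `<=` A /\
  (forall e e', L e -> A e' -> le e' e -> L e').

Definition is_minimizer (le : E -> E -> Prop) (f : set E -> R) (A L : set E) : Prop :=
  lower_contour le A L /\ (forall L', lower_contour le A L' -> f L <= f L').

End Defs.

(* Main.v *)
Require Import Defs.
From HB Require Import structures.
From mathcomp Require Import all_boot all_order all_algebra.
From mathcomp Require Import classical_sets boolp reals ereal esum.
From mathcomp Require Import cardinality fsbigop.
From mathcomp Require Import finmap.
From mathcomp Require Import ring lra.
Import Order.TTheory GRing.Theory Num.Theory.
Local Open Scope classical_set_scope.
Local Open Scope ring_scope.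

Section Helpers.
Context {R : realType} {E : countType}.
Implicit Types (p : E -> R) (S T : set E).

Lemma esum_sub p S T : (forall e, 0 <= p e) -> S `<=` T ->
  (\esum_(i in S) (p i)%:E <= \esum_(i in T) (p i)%:E)%E.
Proof.
move=> p0 ST; rewrite esum_mkcond [X in (_ <= X)%E]esum_mkcond.
apply: le_esum => i _; case: ifPn => iS.
  by rewrite ifT //; apply/mem_set/ST/set_mem.
by case: ifP => // _; rewrite lee_fin.
Qed.

Lemma esum_fin p S : is_distribution p ->
  \esum_(i in S) (p i)%:E = (prob p S)%:E.
Proof.
move=> [p0 p1]; rewrite /prob fineK //.
rewrite ge0_fin_numE; last by apply: esum_ge0 => x _; rewrite lee_fin.
apply: (le_lt_trans (@esum_sub p S setT p0 (@subsetT _ S))).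
by rewrite p1 ltry.
Qed.

Lemma prob_ge0 p S : is_distribution p -> 0 <= prob p S.
Proof.
move=> hp; rewrite -lee_fin -esum_fin //; apply: esum_ge0 => x _.
by rewrite lee_fin; case: hp.
Qed.

Lemma prob_sub p S T : is_distribution p -> S `<=` T -> prob p S <= prob p T.
Proof.
move=> hp ST; rewrite -lee_fin -!esum_fin //; apply: esum_sub ST.
by case: hp.
Qed.

Lemma prob_pt p S e : is_distribution p -> S e -> p e <= prob p S.
Proof.
move=> hp Se; rewrite -lee_fin -esum_fin //.
rewrite -(@esum_set1 _ _ e (fun i => (p i)%:E)); last by rewrite lee_fin; case: hp.
apply: esum_sub; first by case: hp.
by move=> x ->.
Qed.

Lemma prob_set0 p : prob p set0 = 0.
Proof. by rewrite /prob esum_set0. Qed.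

Lemma prob_add p S T : is_distribution p ->
  prob p (S `|` T) + prob p (S `&` T) = prob p S + prob p T.
Proof.
move=> hp; apply: EFin_inj; rewrite !EFinD -!esum_fin //.
have p0 : forall i, (0 <= (p i)%:E)%E by move=> i; rewrite lee_fin; case: hp.
rewrite (esumID S (S `|` T)) ?(esumID S T) //.
have -> : (S `|` T) `&` S = S by apply/seteqP; split=> x /=; tauto.
have -> : (S `|` T) `&` ~` S = T `&` ~` S by apply/seteqP; split=> x /=; tauto.
rewrite (setIC T S).
by rewrite -addeA [X in (_ + X)%E]addeC.
Qed.

End Helpers.

Theorem lemmaA5 (R : realType) (E : countType) (le : E -> E -> Prop)
  (le_refl : forall e, le e e)
  (le_trans : forall e1 e2 e3, le e1 e2 -> le e2 e3 -> le e1 e3)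
  (le_dcc : forall s : nat -> E, (forall n, le (s n.+1) (s n)) ->
            exists N : nat, forall n, (N <= n)%N -> le (s N) (s n))
  (pi0 : R) (hpi0 : 0 < pi0 < 1)
  (pG pB : E -> R) (hG : is_distribution pG) (hB : is_distribution pB)
  (hsupp : forall e, 0 < pG e \/ 0 < pB e)
  (phi : R -> R)
  (hphi : forall x y, 0 <= x -> y <= 1 -> x < y -> phi x < phi y)
  (A : set E) (hA : A !=set0)
  (hex : exists L, is_minimizer le (xi phi pi0 pG pB) A L) :
  exists Lstar, is_minimizer le (xi phi pi0 pG pB) A Lstar /\
    forall L, is_minimizer le (xi phi pi0 pG pB) A L -> L `<=` Lstar.
Proof.
set f := xi phi pi0 pG pB.
have /andP[hpa hpb] := hpi0.
have Dpos : forall S, S !=set0 ->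
    0 < prob pG S * pi0 + prob pB S * (1 - pi0).
  move=> S [e Se].
  have g0 := prob_ge0 pG S hG; have b0 := prob_ge0 pB S hB.
  have ge := prob_pt _ _ _ hG Se; have be := prob_pt _ _ _ hB Se.
  case: (hsupp e) => h; nra.
have nu01 : forall S, S !=set0 -> 0 <= nu pi0 pG pB S <= 1.
  move=> S hS; have hD := Dpos S hS; rewrite /nu.
  have g0 := prob_ge0 pG S hG; have b0 := prob_ge0 pB S hB.
  apply/andP; split; first by apply: divr_ge0; nra.
  rewrite ler_pdivrMr // mul1r; nra.
have phile : forall x y, 0 <= x <= 1 -> 0 <= y <= 1 ->
    (phi x <= phi y) = (x <= y).
  move=> x y /andP[x0 x1] /andP[y0 y1]; apply/idP/idP.
  - move=> h; rewrite leNgt; apply/negP => yx.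
    by have := hphi y x y0 x1 yx; rewrite ltNge h.
  - rewrite le_eqVlt => /orP[/eqP->//|xy]; exact/ltW/hphi.
case: hex => L0 [lc0 min0].
pose m := nu pi0 pG pB L0.
have /andP[m0 m1] : 0 <= m <= 1 by apply: nu01; case: lc0.
pose c1 := pi0 * (1 - m). pose c2 := m * (1 - pi0).
have c10 : 0 <= c1 by rewrite /c1; nra.
have c11 : c1 <= 1 by rewrite /c1; nra.
have c20 : 0 <= c2 by rewrite /c2; nra.
pose h S := prob pG S * c1 - prob pB S * c2.
have key1 : forall S, S !=set0 -> (nu pi0 pG pB S <= m) = (h S <= 0).
  move=> S hS; have hD := Dpos S hS; rewrite /nu ler_pdivrMr // /h /c1 /c2.
  by apply/idP/idP => H; nra.
have key2 : forall S, S !=set0 -> (m <= nu pi0 pG pB S) = (0 <= h S).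
  move=> S hS; have hD := Dpos S hS; rewrite /nu ler_pdivlMr // /h /c1 /c2.
  by apply/idP/idP => H; nra.
have hlc : forall S, lower_contour le A S -> 0 <= h S.
  move=> S lcS; rewrite -key2; last by case: lcS.
  have := min0 S lcS; rewrite /f /xi phile //; apply: nu01;
    solve [by case: lc0 | by case: lcS].
have minE : forall M, is_minimizer le f A M <-> lower_contour le A M /\ h M <= 0.
  move=> M; split.
  - case=> lcM minM; split=> //; rewrite -key1; last by case: lcM.
    have := minM L0 lc0; rewrite /f /xi phile //; apply: nu01;
      solve [by case: lc0 | by case: lcM].
  - case=> lcM hM; split=> // L' lcL'.
    have nM : nu pi0 pG pB M <= m by rewrite key1 //; case: lcM.
    have nL : m <= nu pi0 pG pB L' by rewrite key2 //; [exact: hlc | case: lcL'].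
    rewrite /f /xi phile; first exact: Order.le_trans nM nL.
      by apply: nu01; case: lcM.
    by apply: nu01; case: lcL'.
have minU : forall M1 M2, is_minimizer le f A M1 -> is_minimizer le f A M2 ->
    is_minimizer le f A (M1 `|` M2).
  move=> M1 M2 /minE[lc1 h1] /minE[lc2 h2]; apply/minE.
  case: (lc1) => [[x x1] [s1 c1']]; case: (lc2) => [_ [s2 c2']].
  split.
    split; first by exists x; left.
    split; first by move=> y [/s1|/s2].
    move=> e e' [/c1' H|/c2' H] Ae' lee; [left|right]; exact: H.
  have gadd := prob_add pG M1 M2 hG; have badd := prob_add pB M1 M2 hB.
  have hI : 0 <= h (M1 `&` M2).
    case: (pselect (M1 `&` M2 !=set0)) => [ne|ne].
    + apply: hlc; split=> //; split; first by move=> y [/s1].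
      move=> e e' [e1 e2] Ae' lee; split; [exact: c1' e1 Ae' lee|exact: c2' e2 Ae' lee].
    + have -> : M1 `&` M2 = set0.
        by apply/seteqP; split => y // Hy; apply: ne; exists y.
      by rewrite /h !prob_set0 !mul0r subrr.
  have eg : prob pG (M1 `|` M2) = prob pG M1 + prob pG M2 - prob pG (M1 `&` M2).
    by rewrite -gadd addrK.
  have eb : prob pB (M1 `|` M2) = prob pB M1 + prob pB M2 - prob pB (M1 `&` M2).
    by rewrite -badd addrK.
  have eh : h (M1 `|` M2) = h M1 + h M2 - h (M1 `&` M2).
    by rewrite /h eg eb; ring.
  rewrite eh; lra.
pose U := fun e => exists M, is_minimizer le f A M /\ M e.
have finU : forall s : seq E, (forall x, x \in s -> U x) ->
    exists V, is_minimizer le f A V /\ (forall x, x \in s -> V x).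
  elim=> [|x s IH] hs.
    by exists L0; split.
  case: (hs x (mem_head _ _)) => Mx [mx Mxx].
  case: IH => [y ys|V [mV sV]]; first by apply: hs; rewrite in_cons ys orbT.
  exists (Mx `|` V); split; first exact: minU.
  move=> y; rewrite in_cons => /orP[/eqP->|ys]; [left; exact: Mxx|right; exact: sV].
have approx : forall eps, 0 < eps ->
    exists V, is_minimizer le f A V /\ prob pG U - eps < prob pG V.
  move=> eps eps0.
  have : ((prob pG U - eps)%:E < \esum_(i in U) (pG i)%:E)%E.
    by rewrite esum_fin // lte_fin ltrBlDr ltrDl.
  case/ereal_sup_gt => _ [X [finX XU] <-] lt.
  have finX' := finX.
  case/finite_fsetP: finX => Y eY.
  case: (finU Y) => [x xY|V [mV sV]].
    by apply: XU; rewrite eY.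
  exists V; split=> //; rewrite -lte_fin -esum_fin //.
  apply: (lt_le_trans lt); apply: esum_ge; exists X => //; split=> //.
  by move=> x; rewrite eY => /= xY; exact: sV.
have hU : h U <= 0.
  apply/ler_addgt0Pr => e e0; rewrite add0r.
  case: (approx e e0) => V [mV lt].
  have [_ hV] := (iffLR (minE V) mV).
  have bVU : prob pB V <= prob pB U.
    by apply: prob_sub => // x Vx; exists V.
  move: hV; rewrite /h => hV.
  nra.
exists U; split; last by move=> L mL x Lx; exists L.
apply/minE; split=> //.
split; first by case: (lc0) => [[x x0] _]; exists x, L0; split; [exact: (conj lc0 min0) | exact: x0].
split; first by move=> x [M [[[_ [sM _]] _] Mx]]; exact: sM.
move=> e e' [M [mM Me]] Ae' lee; exists M; split=> //.
by case: mM => [[_ [_ cM]] _]; exact: cM Me Ae' lee.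
Qed.
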